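(* For every formula $\varphi$ of $\mathcal L^{\bigcirc}_\square$ the following are equivalent: (i) $\varphi$ is derivable in $\mathbf{K4H}$; (ii) $\varphi$ is valid on every finite invertible dynamic $\mathbf{K4}$ frame; (iii) $\varphi$ is valid, with respect to the $d$-semantics, on every invertible dynamic topological system $\langle X,\tau,f\rangle$ whose underlying space is $T_D$.
   Context: Language $\mathcal L^{\bigcirc}_\square$: $\varphi::= p\mid \varphi\wedge\varphi\mid\neg\varphi\mid\square\varphi\mid\bigcirc\varphi$, $p$ ranging over a fixed non-empty set $\mathsf{PV}$. Axioms and rules: Taut; K: $\square(\varphi\to\psi)\to(\square\varphi\to\square\psi)$; 4: $\square\varphi\to\square\square\varphi$; ${\rm Next}_\neg$: $\neg\bigcirc\varphi\leftrightarrow\bigcirc\neg\varphi$; ${\rm Next}_\wedge$: $\bigcirc(\varphi\wedge\psi)\leftrightarrow\bigcirc\varphi\wedge\bigcirc\psi$; H: $\square\bigcirc\varphi\leftrightarrow\bigcirc\square\varphi$; rules modus ponens, ${\rm Nec}_\square$, ${\rm Nec}_\bigcirc$. $\mathbf{K4H}$ is axiomatised by Taut, K, 4, ${\rm Next}_\neg$, ${\rm Next}_\wedge$, H, closed under these rules. An invertible dynamic $\mathbf{K4}$ frame is $\langle W,\sqsubset,f\rangle$ with $W$ non-empty, $\sqsubset$ transitive, and $f\colon W\to W$ a bijection such that $w\sqsubset v$ iff $f(w)\sqsubset f(v)$. Kripke truth: $w\models\square\varphi$ iff $v\models\varphi$ for all $v$ with $w\sqsubset v$; $w\models\bigcirc\varphi$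 iff $f(w)\models\varphi$. A $T_D$ space is one in which every singleton is the intersection of an open and a closed set. An invertible DTS is $\langle X,\tau,f\rangle$ with $f$ a homeomorphism of $X$. $d$-semantics: with $d(A)$ the set of $x$ in the closure of $A\setminus\{x\}$, $\|p\|=\nu(p)$, Boolean clauses set-theoretic, $\|\square\varphi\|=X\setminus d(\|\neg\varphi\|)$, $\|\bigcirc\varphi\|=f^{-1}(\|\varphi\|)$. Validity means truth everywhere under every valuation. *)

(* Defs.v *)
From HB Require Import structures.
From mathcomp Require Import all_boot all_order.
From mathcomp Require Import all_classical topology.
Set Implicit Arguments. Unset Strict Implicit. Unset Printing Implicit Defensive.
Local Open Scope classical_set_scope.

Inductive form : Type :=
| Var : nat -> form
| And : form -> form -> form
| Neg : form -> form
| Box : form -> form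
| Next : form -> form.

Definition Imp (a b : form) : form := Neg (And a (Neg b)).
Definition Iff (a b : form) : form := And (Imp a b) (Imp b a).

(* Propositional tautologies: true under every Boolean assignment to the
   propositional atoms (variables) and to modal subformulas [] a, O a. *)
Fixpoint taut_eval (v : form -> bool) (a : form) : bool :=
  match a with
  | Var _ => v a
  | And b c => taut_eval v b && taut_eval v c
  | Neg b => ~~ taut_eval v b
  | Box _ => v a
  | Next _ => v a
  end.

Definition Taut (a : form) : Prop := forall v : form -> bool, taut_eval v a.

Inductive K4H : form -> Prop :=
| K4H_taut a : Taut a -> K4H a
| K4H_K a b : K4H (Imp (Box (Imp a b)) (Imp (Box a) (Box b)))
| K4H_4 a : K4H (Imp (Box a) (Box (Box a)))
| K4H_NextNeg a : K4H (Iff (Neg (Next a)) (Next (Neg a)))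
| K4H_NextAnd a b : K4H (Iff (Next (And a b)) (And (Next a) (Next b)))
| K4H_H a : K4H (Iff (Box (Next a)) (Next (Box a)))
| K4H_mp a b : K4H (Imp a b) -> K4H a -> K4H b
| K4H_necBox a : K4H a -> K4H (Box a)
| K4H_necNext a : K4H a -> K4H (Next a).

Definition inv_dyn_K4_frame (W : Type) (R : W -> W -> Prop) (f : W -> W) : Prop :=
  inhabited W /\
  (forall u v w, R u v -> R v w -> R u w) /\
  bijective f /\
  (forall w v, R w v <-> R (f w) (f v)).

Fixpoint kripke_sat (W : Type) (R : W -> W -> Prop) (f : W -> W)
    (V : nat -> W -> Prop) (w : W) (a : form) : Prop :=
  match a with
  | Var p => V p w
  | And b c => kripke_sat R f V w b /\ kripke_sat R f V w c
  | Neg b => ~ kripke_sat R f V w b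
  | Box b => forall v, R w v -> kripke_sat R f V v b
  | Next b => kripke_sat R f V (f w) b
  end.

Definition kripke_valid (W : Type) (R : W -> W -> Prop) (f : W -> W) (a : form) : Prop :=
  forall (V : nat -> W -> Prop) (w : W), kripke_sat R f V w a.

Definition T_D_space (X : topologicalType) : Prop :=
  forall x : X, exists U C : set X, open U /\ closed C /\ [set x] = U `&` C.

Definition homeomorphism (X : topologicalType) (f : X -> X) : Prop :=
  exists g : X -> X, [/\ cancel f g, cancel g f, continuous f & continuous g].

Definition dset (X : topologicalType) (A : set X) : set X :=
  [set x | closure (A `\ x) x].

Fixpoint dsem (X : topologicalType) (f : X -> X) (nu : nat -> set X) (a : form)
    : set X :=
  match a with
  | Var p => nu p
  | And b c => dsem f nu b `&` dsem f nu c
  | Neg b => ~` dsem f nu b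
  | Box b => ~` dset (~` dsem f nu b)
  | Next b => f @^-1` dsem f nu b
  end.

Definition d_valid (X : topologicalType) (f : X -> X) (a : form) : Prop :=
  forall nu : nat -> set X, dsem f nu a = setT.

(* Main.v *)
Require Import Defs.
From HB Require Import structures.
From mathcomp Require Import all_boot all_order.
From mathcomp Require Import all_classical topology.
Local Open Scope classical_set_scope.

Ltac taut_solve :=
  let v := fresh "v" in
  move=> v /=;
  repeat match goal with
  | |- context [taut_eval v ?x] => case: (taut_eval v x)
  | |- context [v ?x] => case: (v x)
  end; done.

Lemma prop1 {a c} : K4H a -> Taut (Imp a c) -> K4H c.
Proof. by move=> ha ht; apply: K4H_mp (K4H_taut ht) ha. Qed.
Lemma prop2 {a b c} : K4H a -> K4H b -> Taut (Imp a (Imp b c)) -> K4H c.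
Proof. by move=> ha hb ht; apply: K4H_mp (K4H_mp (K4H_taut ht) ha) hb. Qed.
Lemma prop3 {a b c d} : K4H a -> K4H b -> K4H c -> Taut (Imp a (Imp b (Imp c d))) -> K4H d.
Proof. by move=> ha hb hc ht; apply: K4H_mp (K4H_mp (K4H_mp (K4H_taut ht) ha) hb) hc. Qed.

Lemma imp_trans {a b c} : K4H (Imp a b) -> K4H (Imp b c) -> K4H (Imp a c).
Proof. by move=> h1 h2; apply: (prop2 h1 h2); taut_solve. Qed.

Lemma next_imp a b : K4H (Imp (Next (Imp a b)) (Imp (Next a) (Next b))).
Proof.
apply: (prop3 (K4H_NextNeg (And a (Neg b))) (K4H_NextAnd a (Neg b)) (K4H_NextNeg b)).
taut_solve.
Qed.

Definition form_eq_dec (a b : form) : {a = b} + {a <> b}.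
Proof. decide equality; decide equality. Defined.
Definition form_eqb (a b : form) : bool := if form_eq_dec a b then true else false.
Lemma form_eqP : Equality.axiom form_eqb.
Proof. by move=> a b; rewrite /form_eqb; case: form_eq_dec => h; constructor. Qed.
HB.instance Definition _ := hasDecEq.Build form form_eqP.

Lemma iff_refl a : K4H (Iff a a). Proof. by apply: K4H_taut; taut_solve. Qed.

Lemma next_cong {a b} : K4H (Iff a b) -> K4H (Iff (Next a) (Next b)).
Proof.
move=> h; have h1 := K4H_necNext h.
have h2 : K4H (Next (Imp a b)).
  by apply: (prop2 h1 (K4H_NextAnd (Imp a b) (Imp b a))); taut_solve.
have h3 : K4H (Next (Imp b a)).
  by apply: (prop2 h1 (K4H_NextAnd (Imp a b) (Imp b a))); taut_solve.
have h4 := K4H_mp (next_imp a b) h2; have h5 := K4H_mp (next_imp b a) h3.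
by apply: (prop2 h4 h5); taut_solve.
Qed.

Lemma box_mono {a b} : K4H (Imp a b) -> K4H (Imp (Box a) (Box b)).
Proof. by move=> h; apply: K4H_mp (K4H_K a b) (K4H_necBox h). Qed.

Lemma box_cong {a b} : K4H (Iff a b) -> K4H (Iff (Box a) (Box b)).
Proof.
move=> h; have h1 : K4H (Imp a b) by apply: (prop1 h); taut_solve.
have h2 : K4H (Imp b a) by apply: (prop1 h); taut_solve.
by apply: (prop2 (box_mono h1) (box_mono h2)); taut_solve.
Qed.

Lemma box_and a b : K4H (Imp (And (Box a) (Box b)) (Box (And a b))).
Proof.
have h0 : K4H (Imp a (Imp b (And a b))) by apply: K4H_taut; taut_solve.
have h1 := box_mono h0.
have h2 := K4H_K b (And a b).
by apply: (prop2 h1 h2); taut_solve.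
Qed.

Definition nexts (k : nat) (a : form) : form := iter k Next a.

Lemma nexts_neg k a : K4H (Iff (nexts k (Neg a)) (Neg (nexts k a))).
Proof.
elim: k => [|k IH]; first by apply: K4H_taut; taut_solve.
have h := next_cong IH.
by apply: (prop2 h (K4H_NextNeg (nexts k a))); taut_solve.
Qed.

Lemma nexts_and k a b :
  K4H (Iff (nexts k (And a b)) (And (nexts k a) (nexts k b))).
Proof.
elim: k => [|k IH]; first by apply: K4H_taut; taut_solve.
have h := next_cong IH.
by apply: (prop2 h (K4H_NextAnd (nexts k a) (nexts k b))); taut_solve.
Qed.

Lemma nexts_box k a : K4H (Iff (nexts k (Box a)) (Box (nexts k a))).
Proof.
elim: k => [|k IH]; first by apply: K4H_taut; taut_solve.
have h := next_cong IH.
by apply: (prop2 h (K4H_H (nexts k a))); taut_solve.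
Qed.

Fixpoint tr (k : nat) (a : form) : form :=
  match a with
  | Var p => nexts k (Var p)
  | And b c => And (tr k b) (tr k c)
  | Neg b => Neg (tr k b)
  | Box b => Box (tr k b)
  | Next b => tr k.+1 b
  end.

Lemma tr_iff a k : K4H (Iff (nexts k a) (tr k a)).
Proof.
elim: a k => [p|a IHa b IHb|a IHa|a IHa|a IHa] k /=.
- exact: iff_refl.
- by apply: (prop3 (nexts_and k a b) (IHa k) (IHb k)); taut_solve.
- by apply: (prop2 (nexts_neg k a) (IHa k)); taut_solve.
- by apply: (prop2 (nexts_box k a) (box_cong (IHa k))); taut_solve.
- by have := IHa k.+1; rewrite /nexts iterSr.
Qed.

Lemma tr0_K4H a : K4H (tr 0 a) -> K4H a.
Proof. by move=> h; apply: (prop2 h (tr_iff a 0)); taut_solve. Qed.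

Definition Top : form := Neg (And (Var 0) (Neg (Var 0))).
Fixpoint bigAnd (G : seq form) : form :=
  if G is x :: G' then And x (bigAnd G') else Top.
Definition cons (G : seq form) : Prop := ~ K4H (Neg (bigAnd G)).

Lemma bigAnd_in {G x} : x \in G -> K4H (Imp (bigAnd G) x).
Proof.
elim: G => [//|y G IH]; rewrite inE => /orP [/eqP ->|/IH h] /=.
  by apply: K4H_taut; taut_solve.
by apply: (prop1 h); taut_solve.
Qed.

Lemma bigAnd_sub {G G'} : {subset G' <= G} -> K4H (Imp (bigAnd G) (bigAnd G')).
Proof.
elim: G' => [|y G' IH] hs /=; first by apply: K4H_taut; taut_solve.
have h1 := bigAnd_in (hs y (mem_head _ _)).
have h2 : K4H (Imp (bigAnd G) (bigAnd G')).
  by apply: IH => z hz; apply: hs; rewrite inE hz orbT.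
by apply: (prop2 h1 h2); taut_solve.
Qed.

Lemma cons_sub {G G'} : {subset G' <= G} -> cons G -> cons G'.
Proof.
move=> hs hG hG'; apply: hG; have h := bigAnd_sub hs.
by apply: (prop2 h hG'); taut_solve.
Qed.

Lemma cons_ext {G} a : cons G -> cons (a :: G) \/ cons (Neg a :: G).
Proof.
move=> hG; case: (pselect (cons (a :: G))) => [h|h]; [by left|right] => h'.
apply: hG; case: (pselect (K4H (Neg (And a (bigAnd G))))) => h1; last by case: h.
by apply: (prop2 h1 h'); taut_solve.
Qed.

Lemma incons {G a} : a \in G -> Neg a \in G -> ~ cons G.
Proof.
move=> h1 h2 hc; apply: hc.
by apply: (prop2 (bigAnd_in h1) (bigAnd_in h2)); taut_solve.
Qed.

Lemma incons2 {G a b} : a \in G -> b \in G -> Taut (Neg (And a b)) -> ~ cons G.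
Proof.
move=> h1 h2 ht hc; apply: hc; have h3 := K4H_taut ht.
by apply: (prop3 (bigAnd_in h1) (bigAnd_in h2) h3); taut_solve.
Qed.

Lemma incons3 {G a b c} : a \in G -> b \in G -> c \in G ->
  Taut (Neg (And a (And b c))) -> ~ cons G.
Proof.
move=> h1 h2 h3 ht hc; apply: hc; have h4 := K4H_taut ht.
have h5 : K4H (Imp (bigAnd G) (And a (And b c))).
  by apply: (prop3 (bigAnd_in h1) (bigAnd_in h2) (bigAnd_in h3)); taut_solve.
by apply: (prop2 h5 h4); taut_solve.
Qed.

Definition lit (x : form * bool) : form := if x.2 then x.1 else Neg x.1.
Definition gam (S : seq form) (t : seq bool) : seq form := map lit (zip S t).

Lemma extend (L : seq form) {D : seq form} : cons D ->
  exists bs : seq bool, size bs = size L /\ cons (gam L bs ++ D).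
Proof.
elim: L D => [|a L IH] D hD; first by exists [::].
have [h|h] := cons_ext a hD.
- have [bs [hs hc]] := IH _ h; exists (true :: bs); split; first by rewrite /= hs.
  apply: cons_sub hc => x; rewrite /gam /= inE !mem_cat inE.
  by case/orP=> [->|/orP[->|->]]; rewrite ?orbT.
- have [bs [hs hc]] := IH _ h; exists (false :: bs); split; first by rewrite /= hs.
  apply: cons_sub hc => x; rewrite /gam /= inE !mem_cat inE.
  by case/orP=> [->|/orP[->|->]]; rewrite ?orbT.
Qed.

Lemma zip_mem {S : seq form} {t : seq bool} {x} : size t = size S -> x \in S ->
  exists b, (x, b) \in zip S t.
Proof.
elim: S t => [//|y S IH] [//|b t] /= [hs]; rewrite inE => /orP [/eqP ->|hx].
  by exists b; rewrite inE eqxx.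
by have [c hc] := IH t hs hx; exists c; rewrite inE hc orbT.
Qed.

Lemma gam_one {S t x} : size t = size S -> x \in S -> x \in gam S t \/ Neg x \in gam S t.
Proof.
move=> hs hx; have [b hb] := zip_mem hs hx.
have := map_f lit hb; rewrite /gam; case: b {hb} => /= ->; [left|right] => //.
Qed.

Lemma gam_box {S t b} : Box b \in gam S t -> Box b \in S.
Proof.
elim: S t => [|y S IH] [|c t] //=; rewrite inE => /orP [/eqP h|h].
- by case: c h => /= h; [rewrite h mem_head|].
- by rewrite inE (IH t h) orbT.
Qed.

Lemma nnpp (P : Prop) : ~ ~ P -> P.
Proof. by case: (pselect P) => // h /(_ h). Qed.

Section KS.
Context {W : Type} (R : W -> W -> Prop) (f : W -> W) (V : nat -> W -> Prop).

Lemma ksat_imp w a b : kripke_sat R f V w (Imp a b) <-> (kripke_sat R f V w a -> kripke_sat R f V w b).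
Proof.
split=> /= h; first by move=> ha; apply: nnpp => hb; apply: h.
by move=> [ha hb]; apply: hb; apply: h.
Qed.

Lemma ksat_iff w a b : kripke_sat R f V w (Iff a b) <-> (kripke_sat R f V w a <-> kripke_sat R f V w b).
Proof.
split=> [[/ksat_imp h1 /ksat_imp h2]|[h1 h2]]; first by split.
by split; apply/ksat_imp.
Qed.

Lemma ksat_taut w a : taut_eval (fun x => `[< kripke_sat R f V w x >]) a = `[< kripke_sat R f V w a >].
Proof.
elim: a => //= [a IHa b IHb|a IHa]; first by rewrite IHa IHb asbool_and.
by rewrite IHa asbool_neg.
Qed.

Lemma ksat_nexts k w a : kripke_sat R f V w (nexts k a) = kripke_sat R f V (iter k f w) a.
Proof. by elim: k w => [//|k IH] w; rewrite iterSr -IH. Qed.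
End KS.

Lemma ksound (W : Type) (R : W -> W -> Prop) (f : W -> W) :
  inv_dyn_K4_frame R f -> forall a, K4H a -> kripke_valid R f a.
Proof.
move=> [_ [htr [[g fK gK] hR]]] a; elim => {a}.
- move=> a ht V w; have := ht (fun x => `[< kripke_sat R f V w x >]).
  by rewrite ksat_taut => /asboolP.
- move=> a b V w; apply/ksat_imp => h1; apply/ksat_imp => h2 v hv.
  by have /ksat_imp := h1 v hv; apply; apply: h2.
- move=> a V w; apply/ksat_imp => h v hv u hu; exact: h (htr _ _ _ hv hu).
- by move=> a V w; apply/ksat_iff.
- by move=> a b V w; apply/ksat_iff.
- move=> a V w; apply/ksat_iff; split => /= h.
    by move=> u hu; rewrite -(gK u); apply: h; rewrite hR gK.
  by move=> v hv; apply: h; rewrite -hR.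
- by move=> a b _ h1 _ h2 V w; apply: (ksat_imp _ _ _ _ _ _).1 (h1 V w) (h2 V w).
- by move=> a _ h V w v _; apply: h.
- by move=> a _ h V w; apply: h.
Qed.

Fixpoint sub (a : form) : seq form :=
  match a with
  | Var p => [:: a]
  | And b c => a :: sub b ++ sub c
  | Neg b => a :: sub b
  | Box b => a :: sub b
  | Next b => a :: sub b
  end.

Lemma subref a : a \in sub a. Proof. by case: a => *; rewrite mem_head. Qed.

Lemma sub_trans {a b c} : b \in sub a -> c \in sub b -> c \in sub a.
Proof.
elim: a => [p|a IHa a' IHa'|a IHa|a IHa|a IHa] /=.
- by rewrite inE => /eqP -> .
- rewrite inE mem_cat => /orP [/eqP ->|/orP [h|h]] hc //.
  + by rewrite inE mem_cat (IHa h hc) orbT.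
  + by rewrite inE mem_cat (IHa' h hc) !orbT.
- by rewrite inE => /orP [/eqP ->|h] hc //; rewrite inE (IHa h hc) orbT.
- by rewrite inE => /orP [/eqP ->|h] hc //; rewrite inE (IHa h hc) orbT.
- by rewrite inE => /orP [/eqP ->|h] hc //; rewrite inE (IHa h hc) orbT.
Qed.

Fixpoint nd (a : form) : nat :=
  match a with
  | Var _ => 0
  | And b c => maxn (nd b) (nd c)
  | Neg b => nd b
  | Box b => nd b
  | Next b => (nd b).+1
  end.

Lemma nexts_inj {k m p q} : nexts k (Var p) = nexts m (Var q) -> k = m.
Proof.
elim: k m => [|k IH] [|m] //= [h]; by rewrite (IH m h).
Qed.

Lemma sub_nexts {k j p q} : nexts k (Var p) \in sub (nexts j (Var q)) -> (k <= j)%N.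
Proof.
elim: j => [|j IH] /=; first by rewrite inE; case: k.
rewrite inE => /orP [/eqP h|h]; first by rewrite (nexts_inj (q:=q) (m:=j.+1) h).
exact: leqW (IH h).
Qed.

Lemma sub_tr_bound {a j k p} : nexts k (Var p) \in sub (tr j a) -> (k <= j + nd a)%N.
Proof.
elim: a j => [q|a IHa b IHb|a IHa|a IHa|a IHa] j /=.
- by move/sub_nexts; rewrite addn0.
- rewrite inE mem_cat => /orP [/eqP h|/orP [h|h]]; first by case: (k) h.
  + by apply: leq_trans (IHa _ h) _; rewrite leq_add2l leq_maxl.
  + by apply: leq_trans (IHb _ h) _; rewrite leq_add2l leq_maxr.
- by rewrite inE => /orP [/eqP h|h]; [case: (k) h|exact: IHa].
- by rewrite inE => /orP [/eqP h|h]; [case: (k) h|exact: IHa].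
- by move/IHa; rewrite addSnnS.
Qed.

Inductive normal : form -> Prop :=
| NV k p : normal (nexts k (Var p))
| NA a b : normal a -> normal b -> normal (And a b)
| NN a : normal a -> normal (Neg a)
| NB a : normal a -> normal (Box a).

Lemma normal_tr a k : normal (tr k a).
Proof.
elim: a k => [p|a IHa b IHb|a IHa|a IHa|a IHa] k /=.
- exact: NV.
- exact: NA.
- exact: NN.
- exact: NB.
- exact: IHa.
Qed.

Definition boxes (G : seq form) : seq form :=
  flatten [seq (if x is Box b then [:: b; Box b] else [::]) | x <- G].
Definition boxset (G : seq form) : seq form :=
  flatten [seq (if x is Box b then [:: Box b] else [::]) | x <- G].

Lemma boxset_sub G : {subset boxset G <= G}.
Proof.
elim: G => [//|y G IH] x /=; rewrite mem_cat => /orP [h|/IH h]; last by rewrite inE h orbT.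
by case: y h => // b; rewrite inE => /eqP ->; rewrite mem_head.
Qed.

Lemma boxes_in {G b} : Box b \in G -> (b \in boxes G) /\ (Box b \in boxes G).
Proof.
elim: G => [//|y G IH]; rewrite inE => /orP [/eqP <-|/IH [h1 h2]] /=.
  by rewrite !mem_cat !inE !eqxx /= orbT.
by rewrite !mem_cat h1 h2 !orbT.
Qed.

Lemma boxset_box G : K4H (Imp (bigAnd (boxset G)) (Box (bigAnd (boxes G)))).
Proof.
elim: G => [|y G IH] /=.
  apply: K4H_mp (K4H_taut (_ : Taut (Imp (Box Top) (Imp Top (Box Top))))) _.
    by taut_solve.
  by apply: K4H_necBox; apply: K4H_taut; taut_solve.
case: y => [p|a b|a|b|a] /=; try (by apply: (prop1 IH); taut_solve).
have h1 := box_and (Box b) (bigAnd (boxes G)).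
have h2 := box_and b (And (Box b) (bigAnd (boxes G))).
have h3 : K4H (Imp (And (Box b) (bigAnd (boxset G))) (And (Box (Box b)) (Box (bigAnd (boxes G))))).
  by apply: (prop2 (K4H_4 b) IH); taut_solve.
by apply: (prop3 h1 h2 h3); taut_solve.
Qed.

Lemma box_cons {G a} : cons G -> Neg (Box a) \in G -> cons (Neg a :: boxes G).
Proof.
move=> hG hn hc; apply: hG.
have h1 : K4H (Imp (bigAnd (boxes G)) a) by apply: (prop1 hc); taut_solve.
have h2 := imp_trans (boxset_box G) (box_mono h1).
have h3 := bigAnd_sub (boxset_sub G).
have h4 := bigAnd_in hn.
by apply: (prop3 h2 h3 h4); taut_solve.
Qed.

Lemma gam_neg {S : seq form} {t : seq bool} {x} : size t = size S -> cons (gam S t) -> x \in S ->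
  (Neg x \in gam S t <-> ~ x \in gam S t).
Proof.
move=> hs hc hx; split; first by move=> hn hp; exact: incons hp hn hc.
by move=> hn; case: (gam_one hs hx).
Qed.

Lemma gam_and {S : seq form} {t : seq bool} {a b} : size t = size S -> cons (gam S t) ->
  a \in S -> b \in S -> And a b \in S ->
  (And a b \in gam S t <-> a \in gam S t /\ b \in gam S t).
Proof.
move=> hs hc ha hb hab; split.
  move=> h; split; apply: nnpp => hn.
  - have hn' := (gam_neg hs hc ha).2 hn.
    by apply: (incons2 h hn' _ hc); taut_solve.
  - have hn' := (gam_neg hs hc hb).2 hn.
    by apply: (incons2 h hn' _ hc); taut_solve.
move=> [h1 h2]; apply: nnpp => hn; have hn' := (gam_neg hs hc hab).2 hn.
by apply: (incons3 h1 h2 hn' _ hc); taut_solve.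
Qed.

Lemma subAl a b : a \in sub (And a b).
Proof. by rewrite /= inE mem_cat (subref a) /= orbT. Qed.
Lemma subAr a b : b \in sub (And a b).
Proof. by rewrite /= inE mem_cat (subref b) !orbT. Qed.
Lemma subN a : a \in sub (Neg a).
Proof. by rewrite /= inE (subref a) orbT. Qed.
Lemma subB a : a \in sub (Box a).
Proof. by rewrite /= inE (subref a) orbT. Qed.

Section Model.
Context (phi : form).
Let S := sub (tr 0 phi).
Let N := nd phi.
Definition Wm := ((size S).-tuple bool * 'I_N.+1)%type.
Definition R0 (t u : seq bool) : Prop :=
  cons (gam S u) /\ forall b, Box b \in gam S t -> b \in gam S u /\ Box b \in gam S u.
Definition Rm (x y : Wm) : Prop := x.2 = y.2 /\ R0 x.1 y.1.
Definition fm (x : Wm) : Wm := (x.1, ordS x.2).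
Definition Vm (p : nat) (x : Wm) : Prop := nexts (val x.2) (Var p) \in gam S x.1.

Lemma iter_fm k (t : (size S).-tuple bool) i : iter k fm (t, i) = (t, iter k (@ordS N.+1) i).
Proof. by elim: k => [//|k IH]; rewrite !iterS IH. Qed.

Lemma val_iter_ordS k : val (iter k (@ordS N.+1) (ord0 : 'I_N.+1)) = k %% N.+1.
Proof.
elim: k => [|k IH]; first by rewrite mod0n.
by rewrite iterS /= IH -addn1 modnDml addn1.
Qed.

Lemma frame_ok : inv_dyn_K4_frame Rm fm.
Proof.
split; first by constructor; exact: (nseq_tuple (size S) false, ord0).
split.
  move=> [t i] [u j] [s k] [/= e1 [hcu hb1]] [/= e2 [hcs hb2]].
  split; first by rewrite /= e1 e2.
  split=> // b /hb1 [_ /hb2] //.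
split.
  by exists (fun x : Wm => (x.1, ord_pred x.2)); move=> [t i]; rewrite /fm /= ?ordSK ?ord_predK.
move=> [t i] [u j]; split => [[/= -> h]|[/= /ordS_inj -> h]] //.
Qed.

Lemma truth chi : normal chi -> chi \in S -> forall t : (size S).-tuple bool,
  cons (gam S t) -> (kripke_sat Rm fm Vm (t, ord0) chi <-> chi \in gam S t).
Proof.
elim => {chi}.
- move=> k p hin t hc; rewrite ksat_nexts iter_fm /Vm /= val_iter_ordS modn_small //.
  by rewrite ltnS; have := sub_tr_bound hin.
- move=> a b na IHa nb IHb hin t hc.
  have ha : a \in S := sub_trans hin (subAl a b).
  have hb : b \in S := sub_trans hin (subAr a b).
  rewrite (gam_and (size_tuple t) hc ha hb hin) /=.
  by rewrite (IHa ha t hc) (IHb hb t hc).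
- move=> a na IHa hin t hc.
  have ha : a \in S := sub_trans hin (subN a).
  rewrite (gam_neg (size_tuple t) hc ha) /=.
  by rewrite (IHa ha t hc).
- move=> a na IHa hin t hc.
  have ha : a \in S := sub_trans hin (subB a).
  split=> /= h; last first.
    move=> [u j] [/= <- [hcu hbu]]; apply/(IHa ha u hcu).
    exact: (hbu a h).1.
  apply: nnpp => hn.
  have hnb : Neg (Box a) \in gam S t by apply/(gam_neg (size_tuple t) hc hin).
  have hD := box_cons hc hnb.
  have [bs [hs hcb]] := extend S hD.
  pose u : (size S).-tuple bool := @Tuple (size S) bool bs (introT eqP hs).
  have hsub : {subset gam S u <= gam S bs ++ (Neg a :: boxes (gam S t))}.
    by move=> x hx; rewrite mem_cat hx.
  have hcu : cons (gam S u) := cons_sub hsub hcb.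
  have hR : Rm (t, ord0) (u, ord0).
    split=> //; split=> // b /= hbt.
    have [h1 h2] := boxes_in hbt.
    have hbS : Box b \in S := gam_box hbt.
    have hbS' : b \in S := sub_trans hbS (subB b).
    split; apply: nnpp => hn'.
    - have := (gam_neg (size_tuple u) hcu hbS').2 hn' => hN.
      apply: (incons (a:=b) _ _ hcb); first by rewrite mem_cat inE h1 !orbT.
      by rewrite mem_cat hN.
    - have := (gam_neg (size_tuple u) hcu hbS).2 hn' => hN.
      apply: (incons (a:=Box b) _ _ hcb); first by rewrite mem_cat inE h2 !orbT.
      by rewrite mem_cat hN.
  have := h _ hR; rewrite (IHa ha u hcu) => hau.
  apply: (incons (a:=a) _ _ hcb); first by rewrite mem_cat hau.
  by rewrite mem_cat mem_head orbT.
Qed.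
End Model.

Lemma kcomplete phi :
  (forall (W : finType) (R : W -> W -> Prop) (f : W -> W),
      inv_dyn_K4_frame R f -> kripke_valid R f phi) -> K4H phi.
Proof.
move=> H; apply: nnpp => hn.
have hD : cons [:: Neg (tr 0 phi)].
  by move=> hc; apply: hn; apply: tr0_K4H; apply: (prop1 hc); taut_solve.
have [bs [hs hcb]] := extend (sub (tr 0 phi)) hD.
pose t : (size (sub (tr 0 phi))).-tuple bool := @Tuple _ bool bs (introT eqP hs).
have hct : cons (gam (sub (tr 0 phi)) t).
  by apply: cons_sub hcb => x hx; rewrite mem_cat hx.
have hnot : ~ (tr 0 phi \in gam (sub (tr 0 phi)) t).
  move=> hin; apply: (incons (a:=tr 0 phi) _ _ hcb); first by rewrite mem_cat hin.
  by rewrite mem_cat mem_head orbT.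
have hT := @truth phi _ (normal_tr phi 0) (subref _) t hct.
have hv := H _ _ _ (frame_ok phi) (Vm phi) (t, ord0).
have hi := @ksound _ _ _ (frame_ok phi) _ (tr_iff phi 0) (Vm phi) (t, ord0).
move/ksat_iff: hi => [h1 _]; by apply: hnot; apply/hT; apply: h1.
Qed.

Lemma setT_pt {T : Type} (A : set T) : (forall x, A x) -> A = setT.
Proof. by move=> h; apply/seteqP; split=> x // _; apply: h. Qed.

Section TopSound.
Context {X : topologicalType} (f : X -> X) (nu : nat -> set X).

Lemma dsem_taut x a : taut_eval (fun c => `[< dsem f nu c x >]) a = `[< dsem f nu a x >].
Proof.
elim: a => //= [a IHa b IHb|a IHa]; first by rewrite IHa IHb -asbool_and.
by rewrite IHa -asbool_neg.
Qed.

Lemma dimp x a b : dsem f nu (Imp a b) x <-> (dsem f nu a x -> dsem f nu b x).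
Proof.
split=> /= h; first by move=> ha; apply: nnpp => hb; apply: h.
by move=> [ha hb]; apply: hb; apply: h.
Qed.

Lemma diff x a b : dsem f nu (Iff a b) x <-> (dsem f nu a x <-> dsem f nu b x).
Proof.
split=> [[/dimp h1 /dimp h2]|[h1 h2]]; first by split.
by split; apply/dimp.
Qed.

Lemma boxE (A : set X) x : (~` dset (~` A)) x <->
  exists B, nbhs x B /\ forall y, B y -> y <> x -> A y.
Proof.
split.
  move=> h; apply: nnpp => hne; apply: h => N hN; apply: nnpp => hemp.
  apply: hne; exists N; split => // y hy hyx; apply: nnpp => hAy.
  by apply: hemp; exists y; split.
move=> [N [hN hA]] hcl; have [y [[hnA hyx] hNy]] := hcl N hN.
by apply: hnA; apply: hA.
Qed.

Lemma nbhs_open (O : set X) x : open O -> O x -> nbhs x O.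
Proof. by move=> ho hx; apply: open_nbhs_nbhs; split. Qed.
End TopSound.

Lemma tsound (X : topologicalType) (f : X -> X) :
  T_D_space X -> homeomorphism f -> forall a, K4H a -> d_valid f a.
Proof.
move=> hTD [g [fK gK hf hg]] a; elim => {a} [a ht|a b|a|a|a b|a|a b _ h1 _ h2|a _ h|a _ h] nu;
  apply: setT_pt => x.
- by have := ht (fun c => `[< dsem f nu c x >]); rewrite dsem_taut => /asboolP.
- apply/dimp => /boxE [B1 [hB1 h1]]; apply/dimp => /boxE [B2 [hB2 h2]].
  apply/boxE; exists (B1 `&` B2); split; first exact: filterI.
  move=> y [y1 y2] yx; have /dimp := h1 y y1 yx; apply; exact: h2.
- apply/dimp => /boxE [B [hB hA]].
  have [U [C [hU [hC hUC]]]] := hTD x.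
  have hUx : U x by have : [set x] x by []; rewrite hUC => -[].
  have hCx : C x by have : [set x] x by []; rewrite hUC => -[].
  have hBU : nbhs x (B `&` U) by apply: filterI => //; exact: nbhs_open.
  move: hBU; rewrite nbhsE => -[O [hO hOx] hOBU].
  apply/boxE; exists O; split; first exact: nbhs_open.
  move=> y hOy hyx; apply/boxE; exists (O `&` ~` C); split.
    apply: nbhs_open; first by apply: openI => //; exact: closed_openC.
    split => // hCy; apply: hyx.
    have : (U `&` C) y by split => //; have [] := hOBU y hOy.
    by rewrite -hUC.
  move=> z [hOz hCz] hzy; apply: hA; first by have [] := hOBU z hOz.
  by move=> hzx; apply: hCz; rewrite hzx.
- by apply/diff.
- by apply/diff.
- apply/diff; split.
  + move=> /boxE [B [hB hA]]; apply/boxE.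
    exists (g @^-1` B); split.
      move: hB; rewrite nbhsE => -[O [hO hOx] hOB].
      apply: (filterS (P := g @^-1` O)); first by move=> z /hOB.
      apply: nbhs_open; first by move/continuousP : hg; apply.
      by rewrite /= fK.
    move=> z hz hzx; rewrite -[z]gK; apply: hA => // hgz.
    by apply: hzx; rewrite -[z]gK hgz.
  + move=> /boxE [B [hB hA]]; apply/boxE.
    exists (f @^-1` B); split.
      move: hB; rewrite nbhsE => -[O [hO hOx] hOB].
      apply: (filterS (P := f @^-1` O)); first by move=> z /hOB.
      by apply: nbhs_open; first by move/continuousP : hf; apply.
    move=> y hy hyx; apply: hA => // hfy; apply: hyx.
    by rewrite -[y]fK hfy fK.
- have := h1 nu; have := h2 nu => e2 e1.
  have : dsem f nu (Imp a b) x by rewrite e1.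
  by move/dimp; apply; rewrite e2.
- apply/boxE; exists setT; split; first exact: filterT.
  by move=> y _ _; change (dsem f nu a y); rewrite (h nu).
- by change (dsem f nu a (f x)); rewrite (h nu).
Qed.

Definition TX {W : finType} (R : W -> W -> Prop) : Type := (W * nat)%type.
HB.instance Definition _ (W : finType) (R : W -> W -> Prop) := Choice.on (TX R).

Definition bas {W : finType} (R : W -> W -> Prop) (k : nat) (x : TX R) : set (TX R) :=
  [set y | y = x \/ (R x.1 y.1 /\ (k <= y.2)%N)].

Definition opTX {W : finType} (R : W -> W -> Prop) : set_system (TX R) :=
  fun U => forall x : TX R, U x -> exists k : nat, bas R k x `<=` U.

Lemma opTX_T (W : finType) (R : W -> W -> Prop) : opTX R setT.
Proof. by move=> x _; exists 0%N. Qed.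
Lemma opTX_I (W : finType) (R : W -> W -> Prop) : setI_closed (opTX R).
Proof.
move=> A B hA hB x [/hA [k hk] /hB [j hj]]; exists (maxn k j) => y hy; split.
  apply: hk; case: hy => [->|[r l]]; [by left|right; split=>//].
  by apply: leq_trans l; apply: leq_maxl.
apply: hj; case: hy => [->|[r l]]; [by left|right; split=>//].
by apply: leq_trans l; apply: leq_maxr.
Qed.
Lemma opTX_U (W : finType) (R : W -> W -> Prop) (I : Type) (f : I -> set (TX R)) :
  (forall i, opTX R (f i)) -> opTX R (\bigcup_i f i).
Proof.
move=> h x [i _ fx]; have [k hk] := h i x fx; exists k => y /hk fy; by exists i.
Qed.
HB.instance Definition _ (W : finType) (R : W -> W -> Prop) :=
  isOpenTopological.Build (TX R) (@opTX_T W R) (@opTX_I W R) (@opTX_U W R).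

Section TXsec.
Context {W : finType} (R : W -> W -> Prop) (f : W -> W) (V : nat -> W -> Prop).
Hypothesis htr : forall u v w, R u v -> R v w -> R u w.

Lemma nbhsTX (x : TX R) (A : set (TX R)) : nbhs x A = exists B, [/\ opTX R B, B x & B `<=` A].
Proof. by []. Qed.
Lemma openTX (A : set (TX R)) : open A = opTX R A.
Proof. by []. Qed.

Lemma bas_open k x : opTX R (bas R k x).
Proof.
move=> y [->|[ry ly]]; first by exists k.
exists k => z [->|[rz lz]]; first by right.
by right; split => //; exact: htr ry rz.
Qed.

Lemma nbhsTXE (x : TX R) (A : set (TX R)) : nbhs x A <-> exists k, bas R k x `<=` A.
Proof.
rewrite nbhsTX; split=> [[B [hB hx hBA]]|[k hk]].
  by have [k hk] := hB x hx; exists k => y /hk /hBA.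
by exists (bas R k x); split => //; [exact: bas_open| left].
Qed.

Definition gTX (x : TX R) : TX R := (f x.1, x.2).
Definition nuTX (p : nat) : set (TX R) := [set x | V p x.1].

Lemma dtruth a (x : TX R) : dsem gTX nuTX a x <-> kripke_sat R f V x.1 a.
Proof.
elim: a x => [p|a IHa b IHb|a IHa|a IHa|a IHa] x /=.
- by [].
- by rewrite (IHa x) (IHb x).
- by rewrite (IHa x).
- apply: (iff_trans (boxE _ x)); split.
    move=> [B [/nbhsTXE [k hk] hA]] v hv.
    have hy : bas R k x (v, (k + x.2).+1) by right; split => //=; rewrite leqW // leq_addr.
    have hne : (v, (k + x.2).+1) <> x.
      case: x {hk hA hy hv} => w n /= [_ e]; move: e; rewrite -addSn => /eqP.
      by rewrite -{2}[n]add0n eqn_add2r.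
    by have /IHa := hA _ (hk _ hy) hne.
  move=> h; exists (bas R 0 x); split; first by apply/nbhsTXE; exists 0%N.
  move=> y [->//|[ry _]] _; apply/IHa; exact: h.
- exact: IHa.
Qed.

Lemma TX_TD : T_D_space (TX R).
Proof.
move=> x; exists (bas R 0 x), (~` [set y | y <> x /\ R x.1 y.1]); split.
  by rewrite openTX; exact: bas_open.
split.
  apply: open_closedC; rewrite openTX => y [hyx hry].
  exists x.2.+1 => z [->//|[rz lz]]; split; last exact: htr hry rz.
  by move=> hzx; move: lz; rewrite hzx ltnn.
apply/seteqP; split=> z.
  by move=> ->; split; [left| move=> [] ].
move=> [[->//|[rz _]] hC]; apply: nnpp => hzx; exact: hC (conj hzx rz).
Qed.
End TXsec.

Lemma TX_homeo {W : finType} (R : W -> W -> Prop) (f : W -> W) :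
  bijective f -> (forall w v, R w v <-> R (f w) (f v)) -> homeomorphism (gTX R f).
Proof.
move=> [g fK gK] hR; exists (gTX R g); split.
- by move=> [w n]; rewrite /gTX /= fK.
- by move=> [w n]; rewrite /gTX /= gK.
- apply/continuousP => A; rewrite !openTX => hA y hy.
  have [k hk] := hA _ hy; exists k => z [->//|[rz lz]]; apply: hk; right.
  by split => //=; rewrite -hR.
- apply/continuousP => A; rewrite !openTX => hA y hy.
  have [k hk] := hA _ hy; exists k => z [->//|[rz lz]]; apply: hk; right.
  by split => //=; rewrite hR !gK.
Qed.


Theorem mainTheorem9 (phi : form) :
  (K4H phi <->
   (forall (W : finType) (R : W -> W -> Prop) (f : W -> W),
       inv_dyn_K4_frame R f -> kripke_valid R f phi))
  /\
  (K4H phi <->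
   (forall (X : topologicalType) (f : X -> X),
       T_D_space X -> homeomorphism f -> d_valid f phi)).
Proof.
have hk : K4H phi <-> (forall (W : finType) (R : W -> W -> Prop) (f : W -> W),
       inv_dyn_K4_frame R f -> kripke_valid R f phi).
  split; [by move=> h W R f hf; exact: ksound hf _ h | exact: kcomplete].
split => //; split; first by move=> h X f hX hf; exact: tsound hX hf _ h.
move=> H; apply/hk => W R f [hinh [htr [hbij hR]]] V w.
have e := H (TX R) (gTX R f) (@TX_TD _ R htr) (@TX_homeo _ R f hbij hR) (nuTX R V).
have : dsem (gTX R f) (nuTX R V) phi ((w, 0%N) : TX R) by rewrite e.
by move/(@dtruth _ R f V htr).
Qed.
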